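(* Let $E\in M_n(\mathbb{FT})$ be an idempotent of rank $n$, let $A$ be an element of the $\mathcal H$-class of $E$ in $M_n(\mathbb{FT})$, and let $\widehat{\phi_A}:\mathcal{P}C(E)\to\mathcal{P}C(E)$ be the map induced on the projectivisation of $C(E)$ by left multiplication $x\mapsto A\otimes x$. Then, identifying projective space with $\mathbb{R}^{n-1}$ via $(x_1,\dots,x_n)\mapsto(x_1-x_n,\dots,x_{n-1}-x_n)$, the map $\widehat{\phi_A}$ is the restriction to $\mathcal{P}C(E)\subseteq\mathbb{R}^{n-1}$ of a classical affine linear map.
   Context: $\mathbb{FT}$ is $\mathbb{R}$ with $a\oplus b=\max(a,b)$, $a\otimes b=a+b$; $M_n(\mathbb{FT})$ is the semigroup of real $n\times n$ matrices under $(A\otimes B)_{i,j}=\max_k(A_{i,k}+B_{k,j})$, acting on $\mathbb{FT}^n$ similarly. $C(E)$ is the set of finite componentwise maxima of columns of $E$ shifted by real constants; the rank of an idempotent $E$ is the minimal cardinality of a generating set of $C(E)$. Projective tropical $(n-1)$-space is $\mathbb{R}^n$ modulo $x\sim y$ iff $y=x+\lambda(1,\dots,1)$ for some $\lambda\in\mathbb{R}$; $\mathcal{P}C(E)$ is the image of $C(E)$ there. Green's relations: $a\,\mathcal{R}\,b$ iff $aS^1=bS^1$, $a\,\mathcal{L}\,b$ iff $S^1a=S^1b$, $\mathcal{H}=\mathcal{L}\cap\mathcal{R}$. *)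

(* Defs.v *)
(* FT = (R, max, +) with R : realType (the real numbers). *)
From HB Require Import structures.
From mathcomp Require Import all_boot all_order all_algebra.
From mathcomp Require Import reals.
Set Implicit Arguments. Unset Strict Implicit. Unset Printing Implicit Defensive.
Import Order.TTheory GRing.Theory Num.Theory.
Local Open Scope ring_scope.

Section Tropical.
Variable R : realType.

Definition tmax (m : nat) (F : 'I_m.+1 -> R) : R :=
  \big[Num.max/F ord0]_(k < m.+1) F k.

Definition tmul (p q r : nat) (A : 'M[R]_(p, q.+1)) (B : 'M[R]_(q.+1, r))
  : 'M[R]_(p, r) :=
  \matrix_(i, j) tmax (fun k => A i k + B k j).

Definition tspan (n k : nat) (g : 'I_k -> 'cV[R]_n) (x : 'cV[R]_n) : Prop :=
  exists (m : nat) (J : 'I_m.+1 -> 'I_k) (lam : 'I_m.+1 -> R),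
    forall i : 'I_n, x i 0 = tmax (fun l => g (J l) i 0 + lam l).

Definition colspace (n : nat) (E : 'M[R]_n) (x : 'cV[R]_n) : Prop :=
  tspan (fun j : 'I_n => col j E) x.

Definition generates (n k : nat) (E : 'M[R]_n) (g : 'I_k -> 'cV[R]_n) : Prop :=
  forall x, tspan g x <-> colspace E x.

Definition trank_is (n : nat) (E : 'M[R]_n) (r : nat) : Prop :=
  (exists g : 'I_r -> 'cV[R]_n, generates E g) /\
  (forall (k : nat) (g : 'I_k -> 'cV[R]_n), generates E g -> (r <= k)%N).

Definition tidempotent (n : nat) (E : 'M[R]_n.+1) : Prop := tmul E E = E.

(* Green's relations in the semigroup M_n(FT) (S^1 = S with an adjoined identity) *)
Definition greenR (n : nat) (A B : 'M[R]_n.+1) : Prop :=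
  (A = B \/ exists X : 'M[R]_n.+1, A = tmul B X) /\
  (B = A \/ exists Y : 'M[R]_n.+1, B = tmul A Y).

Definition greenL (n : nat) (A B : 'M[R]_n.+1) : Prop :=
  (A = B \/ exists X : 'M[R]_n.+1, A = tmul X B) /\
  (B = A \/ exists Y : 'M[R]_n.+1, B = tmul Y A).

Definition greenH (n : nat) (A B : 'M[R]_n.+1) : Prop :=
  greenL A B /\ greenR A B.

Definition projcoord (n : nat) (x : 'cV[R]_n.+1) : 'cV[R]_n :=
  \col_(i < n) (x (widen_ord (leqnSn n) i) 0 - x ord_max 0).

End Tropical.

(* Main.v *)
Require Import Defs.
From mathcomp Require Import all_boot all_order all_algebra.
From mathcomp Require Import reals.
From mathcomp Require Import lra.
Set Implicit Arguments. Unset Strict Implicit. Unset Printing Implicit Defensive.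
Import Order.TTheory GRing.Theory Num.Theory.
Local Open Scope ring_scope.

Section Aux.
Variable R : realType.

Lemma bms_ge (I : eqType) (s : seq I) (x0 : R) (F : I -> R) k :
  k \in s -> F k <= \big[Num.max/x0]_(i <- s) F i.
Proof.
elim: s => [|a s IH] //=; rewrite big_cons inE => /orP [/eqP-> | /IH h].
  by rewrite le_max lexx.
by rewrite le_max h orbT.
Qed.

Lemma bms_le (I : eqType) (s : seq I) (x0 : R) (F : I -> R) c :
  x0 <= c -> (forall i, F i <= c) -> \big[Num.max/x0]_(i <- s) F i <= c.
Proof.
move=> h0 hF; elim: s => [|a s IH]; first by rewrite big_nil.
by rewrite big_cons ge_max hF IH.
Qed.

Lemma bms_att (I : eqType) (s : seq I) (x0 : R) (F : I -> R) :
  \big[Num.max/x0]_(i <- s) F i = x0 \/ exists k, \big[Num.max/x0]_(i <- s) F i = F k.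
Proof.
elim: s => [|a s IH]; first by rewrite big_nil; left.
rewrite big_cons maxEle; case: ifP => _ //; by right; exists a.
Qed.

Lemma tmax_ge m (F : 'I_m.+1 -> R) k : F k <= tmax F.
Proof. exact: bms_ge (mem_index_enum k). Qed.

Lemma tmax_le m (F : 'I_m.+1 -> R) c : (forall k, F k <= c) -> tmax F <= c.
Proof. move=> h; exact: bms_le. Qed.

Lemma tmax_att m (F : 'I_m.+1 -> R) : exists k, tmax F = F k.
Proof.
case: (bms_att (index_enum 'I_m.+1) (F ord0) F) => h; first by exists ord0.
exact: h.
Qed.


Lemma tmulE p q r (A : 'M[R]_(p, q.+1)) (B : 'M[R]_(q.+1, r)) i j :
  tmul A B i j = tmax (fun k => A i k + B k j).
Proof. by rewrite /tmul mxE. Qed.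

Lemma eq_tmax m (F G : 'I_m.+1 -> R) : (forall k, F k = G k) -> tmax F = tmax G.
Proof.
move=> h; apply/le_anti/andP; split; apply: tmax_le => k.
  by rewrite h; apply: tmax_ge.
by rewrite -h; apply: tmax_ge.
Qed.

Definition Fix n (E : 'M[R]_n.+1) (x : 'cV[R]_n.+1) :=
  forall i, x i 0 = tmax (fun k => E i k + x k 0).

Section Idem.
Variable n : nat.
Variable E : 'M[R]_n.+1.
Hypothesis idE : tidempotent E.

Lemma idem_entry i k : E i k = tmax (fun l => E i l + E l k).
Proof. by rewrite -{1}idE tmulE. Qed.

Lemma idem_le i l k : E i l + E l k <= E i k.
Proof. rewrite (idem_entry i k); exact: (tmax_ge (fun l => E i l + E l k)). Qed.

Lemma fix_le x : Fix E x -> forall i k, E i k + x k 0 <= x i 0.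
Proof. move=> fx i k; rewrite (fx i); exact: (tmax_ge (fun k => E i k + x k 0)). Qed.

Lemma col_fix j : Fix E (col j E).
Proof. move=> i; rewrite mxE {1}idem_entry; apply: eq_tmax => k; by rewrite mxE. Qed.

Lemma colspace_fix x : colspace E x -> Fix E x.
Proof.
case=> m [J [lam H]] i; apply/le_anti/andP; split.
- have [l hl] := tmax_att (fun l => col (J l) E i 0 + lam l).
  rewrite H hl mxE.
  have [k hk] := tmax_att (fun k => E i k + E k (J l)).
  rewrite -idem_entry in hk; rewrite hk.
  apply: le_trans (tmax_ge _ k); rewrite -addrA lerD2l H.
  apply: le_trans (tmax_ge _ l); by rewrite mxE.
- apply: tmax_le => k.
  have [l hl] := tmax_att (fun l => col (J l) E k 0 + lam l).
  rewrite H hl mxE H; apply: le_trans (tmax_ge _ l); rewrite mxE addrA lerD2r.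
  exact: idem_le.
Qed.

End Idem.

Lemma no_remove n (E : 'M[R]_n.+1) (idE : tidempotent E) (rkE : trank_is E n.+1) j :
  (forall x, Fix E x -> forall i, exists2 k, k != j & E i j + x j 0 <= E i k + x k 0) ->
  False.
Proof.
move=> hyp; case: rkE => _ hmin.
move: j hyp hmin idE; case: n E => [|n'] E' j hyp hmin idE'.
  have [k hk _] := hyp _ (col_fix idE' j) j.
  by move: hk; rewrite (ord1 k) (ord1 j) eqxx.
suff G : generates E' (fun k => col (lift j k) E') by have := hmin _ _ G; rewrite ltnn.
move=> x; split.
  by case=> m [J [lam H]]; exists m, (fun l => lift j (J l)), lam.
move=> /(colspace_fix idE') fx; exists n', id, (fun k => x (lift j k) 0) => i.
apply/le_anti/andP; split; last first.
  apply: tmax_le => k; rewrite mxE; exact: (fix_le fx i (lift j k)).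
have [k0 hk0] := tmax_att (fun k => E' i k + x k 0).
have [k kj hk] : exists2 k, k != j & x i 0 <= E' i k + x k 0.
  case: (eqVneq k0 j) => [e|ne]; last by exists k0 => //; rewrite (fx i) hk0.
  have [k kj hk] := hyp x fx i; exists k => //; by rewrite (fx i) hk0 e.
apply: le_trans hk _; case: (unliftP j k) kj => [k' -> _ | -> ]; last by rewrite eqxx.
apply: le_trans (tmax_ge _ k'); by rewrite mxE.
Qed.

Section Idem2.
Variable n : nat.
Variable E : 'M[R]_n.+1.
Hypothesis idE : tidempotent E.
Hypothesis rkE : trank_is E n.+1.
Lemma diag0 j : E j j = 0.
Proof.
have h1 : E j j <= 0.
  have := idem_le idE j j j; lra.
case: (ltrgtP (E j j) 0) => // hlt; last by move: h1; rewrite leNgt hlt.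
exfalso; apply: (no_remove idE rkE (j:=j)) => x fx i.
have [k0 hk0] := tmax_att (fun l => E i l + E l j).
rewrite -(idem_entry idE) in hk0.
case: (eqVneq k0 j) => [e|ne].
  by move: hk0; rewrite e => hk0; exfalso; lra.
exists k0 => //; rewrite hk0 -addrA lerD2l; exact: fix_le.
Qed.

Lemma noprop j j' : j != j' -> E j j' + E j' j = 0 -> False.
Proof.
move=> ne h; apply: (no_remove idE rkE (j:=j)) => x fx i; exists j'; first by rewrite eq_sym.
have h1 := idem_le idE i j j'; have h2 := fix_le fx j' j.
lra.
Qed.

End Idem2.

Lemma rows n (E A X Y : 'M[R]_n.+1) : tidempotent E -> trank_is E n.+1 ->
  A = tmul X E -> E = tmul Y A -> forall i, exists j, forall k, A i k = E j k - Y j i.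
Proof.
move=> idE rkE hA hE.
have rowfix l a b : A l a + E a b <= A l b.
  rewrite hA !tmulE; have [m hm] := tmax_att (fun m => X l m + E m a).
  rewrite hm; apply: le_trans (tmax_ge _ m); rewrite -addrA lerD2l; exact: idem_le.
have hj j : exists l, forall b, E j b = A l b + Y j l.
  have := diag0 idE rkE j; rewrite {1}hE tmulE.
  have [l hl] := tmax_att (fun l => Y j l + A l j); rewrite hl => h0.
  exists l => b; apply/le_anti/andP; split.
    have := rowfix l j b; lra.
  rewrite hE tmulE addrC; exact: (tmax_ge (fun l => Y j l + A l b) l).
have [t ht] := fin_all_exists hj.
have inj : injective t.
  move=> j j' e; apply/eqP; apply/negPn/negP => ne; apply: (noprop idE rkE ne).
  have a1 := ht j j; have a2 := ht j' j; have a3 := ht j j'; have a4 := ht j' j'.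
  rewrite e in a1 a3; have d1 := diag0 idE rkE j; have d2 := diag0 idE rkE j'.
  lra.
move=> i; have /codomP [j ->] := injF_onto inj i.
exists j => k; have := ht j k; lra.
Qed.

Lemma mainperm n (E A : 'M[R]_n.+1) : tidempotent E -> trank_is E n.+1 -> greenH A E ->
  exists (tau : 'I_n.+1 -> 'I_n.+1) (c : 'I_n.+1 -> R),
    forall x, Fix E x -> forall i, tmul A x i 0 = x (tau i) 0 + c i.
Proof.
move=> idE rkE [[hA0 hE0] _].
have [X hA] : exists X, A = tmul X E.
  by case: hA0 => [->|//]; exists E; rewrite idE.
have [Y hE] : exists Y, E = tmul Y A.
  by case: hE0 => [h|//]; exists E; rewrite -h idE.
have [tau htau] := fin_all_exists (rows idE rkE hA hE).
exists tau, (fun i => - Y (tau i) i) => x fx i.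
rewrite tmulE; apply/le_anti/andP; split.
  apply: tmax_le => k; rewrite htau; have := fix_le fx (tau i) k; lra.
have [k hk] := tmax_att (fun k => E (tau i) k + x k 0).
rewrite (fx (tau i)) hk; apply: le_trans (tmax_ge _ k); rewrite htau; lra.
Qed.

Lemma sumsel n (x : 'cV[R]_n.+1) (a : 'I_n.+1) :
  \sum_(k < n) ((a == widen_ord (leqnSn n) k)%:R * projcoord x k 0) = x a 0 - x ord_max 0.
Proof.
case: (unliftP ord_max a) => [k' -> | ->].
  have heq : lift ord_max k' = widen_ord (leqnSn n) k'.
    by apply/val_inj; rewrite /= /bump leqNgt ltn_ord.
  rewrite (bigD1 k') //= big1 ?addr0.
    by rewrite heq eqxx mul1r mxE.
  move=> k ne; rewrite heq.
  have -> : (widen_ord (leqnSn n) k' == widen_ord (leqnSn n) k) = false.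
    by apply/negbTE; move: ne; apply: contra => /eqP [e]; apply/eqP/val_inj.
  by rewrite mul0r.
rewrite big1 ?subrr // => k _.
have -> : (ord_max == widen_ord (leqnSn n) k) = false.
  by apply/negbTE; rewrite -val_eqE /= neq_ltn ltn_ord orbT.
by rewrite mul0r.
Qed.

End Aux.

(* The dimension "n" of the paper is n.+1 here; R^{n-1} is 'cV[R]_n. *)
Theorem corollary7p5 (R : realType) (n : nat) (E A : 'M[R]_n.+1) :
  tidempotent E -> trank_is E n.+1 -> greenH A E ->
  exists (M : 'M[R]_n) (c : 'cV[R]_n),
    forall x : 'cV[R]_n.+1, colspace E x ->
      projcoord (tmul A x) = M *m projcoord x + c.
Proof.
move=> idE rkE hH.
have [tau [c hm]] := mainperm idE rkE hH.
exists (\matrix_(i, k) (((tau (widen_ord (leqnSn n) i) == widen_ord (leqnSn n) k)%:R : R)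
          - (tau ord_max == widen_ord (leqnSn n) k)%:R)).
exists (\col_i (c (widen_ord (leqnSn n) i) - c ord_max)).
move=> x /(colspace_fix idE) fx.
apply/matrixP => i j; rewrite (ord1 j) [LHS]mxE !hm // !mxE.
under eq_bigr => k _ do rewrite mxE mulrBl.
rewrite sumrB (sumsel x (tau _)) (sumsel x (tau _)). 
set a := x (tau _) 0; set b := x (tau ord_max) 0; set d := x ord_max 0.
set e := c _; set f := c ord_max.
lra.
Qed.
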